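(* Let $G$ be a connected graph that is not complete and let $K\subseteq V(G)$ be a nonempty set of universal vertices of $G$. Let $G_K$ be the graph obtained from $G$ by adding a new vertex $x$ with $N_{G_K}(x)=K$. Then $\chi(\mathcal{R}(G_K))=\chi(\mathcal{R}(G))$.
   Context: For a connected graph $G$, a search tree on $G$ is a rooted tree with vertex set $V(G)$ defined recursively: its root is some vertex $r\in V(G)$, and the children of $r$ are the roots of search trees on the connected components of $G-r$. For a rooted tree $T$ and $w\in V(T)$, $T|w$ denotes the subtree rooted at $w$. Let $T$ be a search tree on $G$, let $v$ be a child of $u$ in $T$, and let $p$ be the parent of $u$ (if it exists). The $uv$-rotation transforms $T$ into the search tree $T'$ in which: $u$ is a child of $v$ and $v$ is a child of $p$ (or $v$ is the root if $u$ was the root); every subtree of $u$ in $T$ other than $T|v$ is a subtree of $u$ in $T'$; and every subtree $S$ of $v$ in $T$ is a subtree of $u$ in $T'$ if $u$ is adjacent in $G$ to some vertex of $S$, and a subtree of $v$ in $T'$ otherwise. The rotation graph $\mathcal{R}(G)$ is the graph whose vertices are the search trees on $G$, two being adjacent iff they differ by one rotation. $\chi$ denotes chromatic number. A vertex is universal if it is adjacent to all other vertices. *)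

(* Defs.v *)
From mathcomp Require Import all_boot.
From mathcomp Require Import boolp.
Set Implicit Arguments. Unset Strict Implicit. Unset Printing Implicit Defensive.

Section SearchTrees.
Variable T : finType.
Variable e : rel T. (* a finite simple graph: e symmetric and irreflexive *)

Definition restr (S : {set T}) : rel T := [rel a b | [&& a \in S, b \in S & e a b]].

(* G[S] is connected (S nonempty is checked separately where needed) *)
Definition connected_in (S : {set T}) : Prop :=
  forall a b, a \in S -> b \in S -> connect (restr S) a b.

Definition component_of (S C : {set T}) : Prop :=
  [/\ C \subset S, C != set0, connected_in C &
      forall a b, a \in C -> b \in S :\: C -> ~~ e a b].

(* A rooted tree with vertex set V(G) is encoded by its parent map
   par : T -> option T (None = root). *)
Definition ptree := {ffun T -> option T}.

(* is_stree par S r : the restriction of par to S is a search tree on G[S]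
   rooted at r (the parent of r itself is not constrained here). *)
Inductive is_stree (par : ptree) : {set T} -> T -> Prop :=
| STree (S : {set T}) (r : T) :
    r \in S -> connected_in S ->
    (forall C, component_of (S :\ r) C ->
       exists2 c, c \in C & par c = Some r /\ is_stree par C c) ->
    is_stree par S r.

Definition is_search_tree (par : ptree) : Prop :=
  exists r, par r = None /\ is_stree par setT r.

Definition parrel (par : ptree) : rel T := [rel a b | par a == Some b].
Definition subtree (par : ptree) (w : T) : {set T} :=
  [set z | connect (parrel par) z w].

(* the uv-rotation, where v is a child of u *)
Definition rotate (par : ptree) (u v : T) : ptree :=
  [ffun z => if z == v then par u
             else if z == u then Some v
             else if par z == Some v then
               (if [exists y in subtree par z, e u y] then Some u else Some v)
             else par z].

Definition rotation (par par' : ptree) : Prop :=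
  exists u v, par v = Some u /\ par' = rotate par u v.

Definition radj (t t' : ptree) : Prop :=
  [/\ is_search_tree t, is_search_tree t', t != t' & (rotation t t' \/ rotation t' t)].

Definition rcolorable (k : nat) : Prop :=
  exists f : ptree -> nat,
    (forall t, is_search_tree t -> f t < k) /\
    (forall t t', radj t t' -> f t != f t').

Lemma rcolorable_exists : exists k, `[< rcolorable k >].
Proof.
exists #|{: ptree}|; apply/asboolP.
exists (fun t => nat_of_ord (enum_rank t)); split.
  by move=> t _; exact: ltn_ord.
move=> t t' [_ _ ntt' _]; apply/negP => /eqP /ord_inj /enum_rank_inj Htt'.
by rewrite Htt' eqxx in ntt'.
Qed.

Definition chi_R : nat := ex_minn rcolorable_exists.

End SearchTrees.

(* G_K : G plus a new vertex (None) whose neighbourhood is exactly K *)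
Definition addv (T : finType) (e : rel T) (K : {set T}) : rel (option T) :=
  fun a b => match a, b with
             | Some a, Some b => e a b
             | None, Some b => b \in K
             | Some a, None => a \in K
             | None, None => false
             end.

(* Main.v *)
Require Import Defs.
From mathcomp Require Import all_boot.
Set Implicit Arguments. Unset Strict Implicit. Unset Printing Implicit Defensive.

Section Gen.
Variable T : finType.
Implicit Types (par : ptree T) (S C D : {set T}).

Definition fp par (z : T) : T := odflt z (par z).
Notation anc par := (connect (parrel par)).

Lemma parrelE par a b : parrel par a b = (par a == Some b).
Proof. by []. Qed.

Lemma anc_fp par y : anc par y (fp par y).
Proof.
rewrite /fp; case E: (par y) => [b|] //=; apply: connect1; by rewrite parrelE E.
Qed.

Lemma ancP par y z : reflect (exists n, iter n (fp par) y = z) (anc par y z).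
Proof.
apply: (iffP idP).
  case/connectP=> p; elim: p y => [|x p IH] y /=; first by move=> _ ->; exists 0.
  case/andP=> /eqP Hy Hp Hz; have [n Hn] := IH _ Hp Hz.
  by exists n.+1; rewrite iterSr /fp Hy.
case=> n; elim: n y => [|n IH] y; first by move=> /= ->.
rewrite iterSr => /IH; exact: connect_trans (anc_fp _ _).
Qed.

Lemma anc_inv par y z : anc par y z -> y = z \/ exists2 w, par y = Some w & anc par w z.
Proof.
case/ancP=> n; elim: n y => [|n IH] y; first by left.
rewrite iterSr => H; case E: (par y) => [w|].
  by right; exists w => //; apply/ancP; exists n; rewrite -H /fp E.
by have := IH y; rewrite E; apply; rewrite -H /fp E.
Qed.

Lemma anc_chain par y a b : anc par y a -> anc par y b -> anc par a b || anc par b a.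
Proof.
case/ancP=> m Hm; case/ancP=> n Hn.
case: (leqP m n) => Hmn.
  apply/orP; left; apply/ancP; exists (n - m); by rewrite -Hm -iterD subnK.
apply/orP; right; apply/ancP; exists (m - n); rewrite -Hn -iterD subnK //.
exact: ltnW.
Qed.

Lemma anc_child par y w : anc par y w -> y != w -> exists2 c, par c = Some w & anc par y c.
Proof.
case/ancP=> n; elim: n y => [|n IH] y; first by move=> /= ->; rewrite eqxx.
rewrite iterSr => Hn Hyw.
case: (eqVneq (fp par y) w) => Hf.
  exists y => //; move: Hf Hyw; rewrite /fp; case: (par y) => [b|] /= ->; first by [].
  by rewrite eqxx.
have [c Hc Hac] := IH _ Hn Hf; exists c => //.
exact: connect_trans (anc_fp _ _) Hac.
Qed.

Lemma anc_step par a b : par a = Some b -> anc par a b.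
Proof. by move=> H; apply: connect1; rewrite parrelE H. Qed.

Lemma connect_fwd (rl : rel T) (P : pred T) a b :
  connect rl a b -> P a -> (forall p q, P p -> rl p q -> P q) -> P b.
Proof.
move=> /connectP [p Hp ->] Pa Hs; elim: p a Pa Hp => [|x p IH] a Pa //=.
case/andP=> Hax Hp; apply: IH Hp; exact: Hs Pa Hax.
Qed.

Section Root.
Variables (par : ptree T) (r : T).
Hypothesis Hr : par r = None.
Hypothesis Hreach : forall z, anc par z r.

Lemma iter_root n : iter n (fp par) r = r.
Proof. by elim: n => //= n ->; rewrite /fp Hr. Qed.

Lemma anc_antisym a b : anc par a b -> anc par b a -> a = b.
Proof.
case/ancP=> m Hm; case/ancP=> n Hn.
have Hp : forall k, iter (k * (n + m)) (fp par) a = a.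
  elim=> // k IH; by rewrite mulSn iterD IH iterD Hm Hn.
case: (posnP (n + m)) => Hnm.
  by move: Hnm => /eqP; rewrite addn_eq0 => /andP [_ /eqP Hm0]; rewrite -Hm Hm0.
have [p Hpr] := ancP _ _ _ (Hreach a).
have Ha : a = r.
  rewrite -{1}(Hp p) -(subnK (leq_pmulr p Hnm)) iterD Hpr; exact: iter_root.
by rewrite -Hm Ha iter_root.
Qed.

Lemma par_neq a b : par a = Some b -> ~~ anc par b a.
Proof.
move=> Hab; apply/negP => Hba.
have Eab := anc_antisym (anc_step Hab) Hba; subst b.
have [n Hn] := ancP _ _ _ (Hreach a).
have : iter n (fp par) a = a by elim: n {Hn} => //= n ->; rewrite /fp Hab.
rewrite Hn => Ear; by rewrite -Ear Hr in Hab.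
Qed.

Lemma par_irr a : par a != Some a.
Proof. apply/eqP => H; by have := par_neq H; rewrite connect0. Qed.

End Root.

Variable e : rel T.
Hypothesis esym : symmetric e.

Lemma comp_sub S C D a : component_of e S C -> D \subset S -> connected_in e D ->
  a \in D -> a \in C -> D \subset C.
Proof.
case=> CS _ _ Cno DS Dc aD aC; apply/subsetP => b bD.
apply: (connect_fwd (P := fun x => x \in C) (Dc a b aD bD) aC) => p q pC /and3P [_ qD epq].
apply/negPn/negP => qC.
have : q \in S :\: C by rewrite inE qC (subsetP DS).
by move/(Cno _ _ pC); rewrite epq.
Qed.

Lemma restrE S a b : restr e S a b = [&& a \in S, b \in S & e a b].
Proof. by []. Qed.

Lemma restr_sym S : symmetric (restr e S).
Proof. by move=> a b; rewrite !restrE esym andbCA. Qed.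

Lemma comp_exists S z : z \in S -> exists2 C, component_of e S C & z \in C.
Proof.
move=> zS; set C := [set y in S | connect (restr e S) z y].
have zC : z \in C by rewrite inE zS connect0.
exists C => //; split.
- by apply/subsetP => y; rewrite inE => /andP [].
- by apply/set0Pn; exists z.
- have H : forall y, y \in C -> connect (restr e C) z y.
    move=> y; rewrite inE => /andP [_].
    have: (y \in C) && connect (restr e C) z y -> connect (restr e C) z y by case/andP.
    move=> H1 H2; apply: H1; apply: (connect_fwd (P := fun y => (y \in C) && connect (restr e C) z y) H2).
      by rewrite zC connect0.
    move=> p q /andP [pC Hzp] /and3P [pS qS epq].
    have qC : q \in C.
      rewrite inE qS; move: pC; rewrite inE => /andP [_ Hzp'].
      apply: connect_trans Hzp' (connect1 _); by rewrite restrE pS qS.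
    rewrite qC; apply: connect_trans Hzp (connect1 _); by rewrite restrE pC qC.
  move=> a b aC bC; apply: connect_trans (H b bC).
  by rewrite (sym_connect_sym (restr_sym C)); apply: H.
- move=> a b; rewrite !inE => /andP [aS Hza] /andP [/negP bC bS].
  apply/negP => eab; apply: bC; rewrite bS /=.
  apply: connect_trans Hza (connect1 _); by rewrite restrE aS bS.
Qed.

Lemma comp_eq S C C' z : component_of e S C -> component_of e S C' -> z \in C -> z \in C' -> C = C'.
Proof.
move=> HC HC' zC zC'; apply/eqP; rewrite eqEsubset.
case: (HC) => CS _ Cc _; case: (HC') => C'S _ C'c _.
by rewrite (comp_sub HC' CS Cc zC zC') (comp_sub HC C'S C'c zC' zC).
Qed.

End Gen.

Section Gen2.
Variable T : finType.
Implicit Types (par : ptree T) (S C D : {set T}).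
Notation anc par := (connect (parrel par)).
Variable e : rel T.
Hypothesis esym : symmetric e.

Definition good par := exists r, [/\ par r = None, forall z, anc par z r,
  forall a b, e a b -> anc par a b \/ anc par b a &
  forall w, connected_in e (subtree par w)].

Lemma card_comp S r C : component_of e (S :\ r) C -> r \in S -> #|C| < #|S|.
Proof.
case=> CS _ _ _ rS; apply: proper_card; exact: sub_proper_trans CS (properD1 rS).
Qed.

Lemma good_stree par : good par -> is_search_tree e par.
Proof.
move=> [r [Hr Hreach Hedge Hconn]]; exists r; split=> //.
have Hall : forall w, is_stree e par (subtree par w) w.
  move=> w; have [n] := ubnP #|subtree par w|; elim: n w => // n IH w Hlt.
  constructor; [by rewrite inE connect0 | exact: Hconn | ].
  move=> C HC; case: (HC) => CS /set0Pn [a aC] Cc Cno.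
  have := subsetP CS a aC; rewrite !inE => /andP [aw Haw].
  have [c Hc Hac] := anc_child Haw aw.
  have subc : subtree par c \subset subtree par w :\ w.
    apply/subsetP => z; rewrite !inE => Hz; apply/andP; split.
      apply/eqP => Ezw; subst z. by have := par_neq Hr Hreach Hc; rewrite Hz.
    exact: connect_trans Hz (anc_step Hc).
  have EC : C = subtree par c.
    apply/eqP; rewrite eqEsubset; apply/andP; split; last first.
      apply: (comp_sub HC subc (Hconn c) _ aC); by rewrite inE.
    apply/subsetP => b bC; rewrite inE.
    apply: (connect_fwd (P := fun p => anc par p c) (Cc a b aC bC) Hac).
    move=> p q Hpc; rewrite restrE => /and3P [_ qC epq].
    have := subsetP CS q qC; rewrite !inE => /andP [qw Hqw].
    case: (Hedge _ _ epq) => H.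
      case/orP: (anc_chain H Hpc) => // Hcq.
      case: (anc_inv Hcq) => [->|[w' Hw' Hw'q]]; first exact: connect0.
      rewrite Hc in Hw'; case: Hw' => ?; subst w'.
      by rewrite (anc_antisym Hr Hreach Hw'q Hqw) eqxx in qw.
    exact: connect_trans H Hpc.
  exists c; first by rewrite EC inE connect0.
  split => //; rewrite EC; apply: IH.
  have : #|subtree par c| < #|subtree par w|.
    apply: proper_card; apply: sub_proper_trans subc (properD1 _).
    by rewrite inE connect0.
  move=> H; exact: leq_trans H Hlt.
have -> : [set: T] = subtree par r by apply/setP=> z; rewrite !inE Hreach.
exact: Hall.
Qed.

Lemma stree_IS1 par S r : is_stree e par S r -> forall z, z \in S -> anc par z r.
Proof.
have [n] := ubnP #|S|; elim: n S r => // n IH S r Hlt Hst.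
case: Hst Hlt => {}S {}r rS Sc Hcomp Hlt z zS.
case: (eqVneq z r) => [->|zr]; first exact: connect0.
have zS' : z \in S :\ r by rewrite in_setD1 zr.
have [C HC zC] := comp_exists esym zS'.
have [c cC [Hc Hst']] := Hcomp C HC.
have HCS : #|C| < n by apply: leq_trans (card_comp HC rS) _.
exact: connect_trans (IH _ _ HCS Hst' z zC) (anc_step Hc).
Qed.

Lemma stree_IS2 par S r : is_stree e par S r -> forall a b, a \in S -> b \in S -> e a b ->
  anc par a b \/ anc par b a.
Proof.
have [n] := ubnP #|S|; elim: n S r => // n IH S r Hlt Hst.
have H1 := stree_IS1 Hst.
case: Hst Hlt H1 => {}S {}r rS Sc Hcomp Hlt H1 a b aS bS eab.
case: (eqVneq a r) => [->|ar]; first by right; exact: H1.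
case: (eqVneq b r) => [->|br]; first by left; exact: H1.
have aS' : a \in S :\ r by rewrite in_setD1 ar.
have [C HC aC] := comp_exists esym aS'.
have bC : b \in C.
  apply/negPn/negP => bC; case: HC => _ _ _ Cno.
  by have := Cno a b aC; rewrite !inE bC br bS eab => /(_ isT).
have [c cC [Hc Hst']] := Hcomp C HC.
have HCS : #|C| < n by apply: leq_trans (card_comp HC rS) _.
exact: IH HCS Hst' a b aC bC eab.
Qed.

Lemma comp_child par S r C C' c c' :
  (forall a b, anc par a b -> anc par b a -> a = b) ->
  component_of e (S :\ r) C -> component_of e (S :\ r) C' ->
  c \in C -> c' \in C' -> par c = Some r -> par c' = Some r -> anc par c c' -> C = C'.
Proof.
move=> Hanti HC HC' cC cC' Hc Hc' Hcc'.
case: (anc_inv Hcc') => [Ecc'|[w Hw Hwc']].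
  subst c'; exact: comp_eq HC HC' cC cC'.
rewrite Hc in Hw; case: Hw => ?; subst w.
have := Hanti _ _ Hwc' (anc_step Hc') => Erc'.
case: HC' => C'S _ _ _; have := subsetP C'S c' cC'; by rewrite Erc' !inE eqxx.
Qed.

Lemma stree_IS3 par S r : (forall a b, anc par a b -> anc par b a -> a = b) ->
  is_stree e par S r -> forall w, w \in S ->
  exists Sw, is_stree e par Sw w /\ (forall z, z \in S -> anc par z w -> z \in Sw).
Proof.
move=> Hanti; have [n] := ubnP #|S|; elim: n S r => // n IH S r Hlt Hst.
have H1 := stree_IS1 Hst.
have Hst0 := Hst.
case: Hst Hlt H1 Hst0 => {}S {}r rS Sc Hcomp Hlt H1 Hst0 w wS.
case: (eqVneq w r) => [->|wr]; first by exists S; split.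
have wS' : w \in S :\ r by rewrite in_setD1 wr.
have [C HC wC] := comp_exists esym wS'.
have [c cC [Hc Hst']] := Hcomp C HC.
have HCS : #|C| < n by apply: leq_trans (card_comp HC rS) _.
have [Sw [HSw HzSw]] := IH _ _ HCS Hst' w wC.
exists Sw; split => // z zS Hzw; apply: HzSw => //.
case: (eqVneq z r) => [Ezr|zr].
  subst z; by rewrite (Hanti _ _ Hzw (H1 w wS)) eqxx in wr.
have zS' : z \in S :\ r by rewrite in_setD1 zr.
have [C' HC' zC'] := comp_exists esym zS'.
have [c' cC' [Hc' Hst'']] := Hcomp C' HC'.
have Hzc' := stree_IS1 Hst'' zC'.
have Hwc := stree_IS1 Hst' wC.
suff -> : C = C' by [].
case/orP: (anc_chain Hzw Hzc') => [Hwc'|Hc'w].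
  case/orP: (anc_chain Hwc Hwc') => H.
    exact: comp_child Hanti HC HC' cC cC' Hc Hc' H.
  by symmetry; exact: comp_child Hanti HC' HC cC' cC Hc' Hc H.
case: (anc_inv Hc'w) => [Ec'w|[w' Hw' Hw'w]].
  subst c'; exact: comp_eq HC HC' wC cC'.
rewrite Hc' in Hw'; case: Hw' => ?; subst w'.
by rewrite (Hanti _ _ Hw'w (H1 w wS)) eqxx in wr.
Qed.

Lemma stree_good par : is_search_tree e par -> good par.
Proof.
case=> r [Hr Hst].
have Hreach : forall z, anc par z r by move=> z; exact: (stree_IS1 Hst (in_setT z)).
exists r; split => //.
  move=> a b eab; exact: (stree_IS2 Hst (in_setT a) (in_setT b) eab).
move=> w; have [Sw [HSw HzSw]] := stree_IS3 (anc_antisym Hr Hreach) Hst (in_setT w).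
have -> : subtree par w = Sw.
  apply/setP=> z; rewrite inE; apply/idP/idP => H.
    exact: HzSw.
  exact: (stree_IS1 HSw H).
by case: HSw.
Qed.

Lemma goodE par : is_search_tree e par <-> good par.
Proof. split; [exact: stree_good | exact: good_stree]. Qed.

End Gen2.

Section Gen3.
Variable T : finType.
Implicit Types (par : ptree T) (S C D : {set T}).
Notation anc par := (connect (parrel par)).

Lemma anc_ind par z (P : T -> Prop) : P z ->
  (forall y w, y != z -> par y = Some w -> anc par w z -> P w -> P y) ->
  forall y, anc par y z -> P y.
Proof.
move=> Pz Hs y /ancP [n]; elim: n y => [|n IH] y; first by move=> /= ->.
rewrite iterSr => H.
case: (eqVneq y z) => [->|yz] //.
case E: (par y) => [w|].
  have Hw : fp par y = w by rewrite /fp E.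
  rewrite Hw in H; apply: Hs yz E _ (IH _ H); apply/ancP; by exists n.
have Hw : fp par y = y by rewrite /fp E.
by rewrite Hw in H; apply: IH.
Qed.

Lemma connect_fwdP (rl : rel T) (P : T -> Prop) a b :
  connect rl a b -> P a -> (forall p q, P p -> rl p q -> P q) -> P b.
Proof.
move=> /connectP [p Hp ->] Pa Hs; elim: p a Pa Hp => [|x p IH] a Pa //=.
case/andP=> Hax Hp; apply: IH Hp; exact: Hs Pa Hax.
Qed.

Lemma connect_map (T' : finType) (rl : rel T) (rl' : rel T') (f : T -> T') a b :
  (forall p q, rl p q -> rl' (f p) (f q)) -> connect rl a b -> connect rl' (f a) (f b).
Proof.
move=> Hf H; apply: (connect_fwd (P := fun y => connect rl' (f a) (f y)) H) => //.
move=> p q Hp Hpq; apply: connect_trans Hp (connect1 _); exact: Hf.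
Qed.

Lemma connect_last (rl : rel T) a b : connect rl a b -> a != b ->
  exists2 p, connect rl a p & rl p b.
Proof.
case/connectP=> s; elim/last_ind: s => [|s x IH] /=; first by move=> _ -> ; rewrite eqxx.
rewrite rcons_path last_rcons => /andP [Hp Hl] -> _.
exists (last a s) => //; apply/connectP; by exists s.
Qed.

Lemma leaf_sub par c : (forall y, par y != Some c) -> subtree par c = [set c].
Proof.
move=> H; apply/setP => y; rewrite !inE; apply/idP/idP => [Hy|/eqP ->]; last exact: connect0.
apply/negPn/negP => yc; have [p _] := connect_last Hy yc.
by rewrite parrelE (negbTE (H p)).
Qed.

Lemma sib_eq par r a b p : par r = None -> (forall z, anc par z r) ->
  par a = Some p -> par b = Some p -> anc par a b -> a = b.
Proof.
move=> Hr Hreach Ha Hb Hab; case: (anc_inv Hab) => [//|[w Hw Hwb]].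
rewrite Ha in Hw; case: Hw => ?; subst w.
have := anc_antisym Hr Hreach Hwb (anc_step Hb) => Epb; subst b.
by have := par_irr Hr Hreach p; rewrite Hb eqxx.
Qed.

Variable e : rel T.

Lemma rotE par u v y : rotate e par u v y =
  if y == v then par u else if y == u then Some v
  else if par y == Some v then
    (if [exists y0 in subtree par y, e u y0] then Some u else Some v)
  else par y.
Proof. by rewrite /rotate ffunE. Qed.

Section Rot.
Variables (t : ptree T) (u v : T).
Hypothesis Hvu : t v = Some u.
Hypothesis Huv : u != v.
Hypothesis Hu : t u != Some v.
Notation t2 := (rotate e t u v).

Lemma rot_v : t2 v = t u. Proof. by rewrite rotE eqxx. Qed.
Lemma rot_u : t2 u = Some v. Proof. by rewrite rotE (negbTE Huv) eqxx. Qed.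
Lemma rot_ch y : t y = Some v -> t2 y = Some u \/ t2 y = Some v.
Proof.
move=> Hy; rewrite rotE Hy eqxx.
have yv : y != v by apply/eqP => Eyv; subst y; rewrite Hvu in Hy; case: Hy => Euv; move: Huv; rewrite Euv eqxx.
have yu : y != u by apply/eqP => Eyu; subst y; move: Hu; rewrite Hy eqxx.
rewrite (negbTE yv) (negbTE yu); case: ifP; by [left|right].
Qed.
Lemma rot_oth y : y != v -> y != u -> t y != Some v -> t2 y = t y.
Proof. by move=> yv yu Hy; rewrite rotE (negbTE yv) (negbTE yu) (negbTE Hy). Qed.

Lemma rot_anc z y : z != u -> z != v -> anc t2 y z = anc t y z.
Proof.
move=> zu zv; apply/idP/idP.
  move: y; apply: (anc_ind (P := fun y => anc t y z)); first exact: connect0.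
  move=> y w yz Hw _ Hwz.
  case: (eqVneq y v) => [Eyv|yv].
    subst y; rewrite rot_v in Hw.
    apply: connect_trans (anc_step Hvu) (connect_trans (anc_step Hw) Hwz).
  case: (eqVneq y u) => [Eyu|yu].
    subst y; rewrite rot_u in Hw; case: Hw => ?; subst w.
    case: (anc_inv Hwz) => [Evz|[w' Hw' Hw'z]]; first by rewrite Evz eqxx in zv.
    rewrite Hvu in Hw'; case: Hw' => ?; subst w'; exact: Hw'z.
  case: (eqVneq (t y) (Some v)) => Hyv.
    case: (rot_ch Hyv) => H; rewrite H in Hw; case: Hw => ?; subst w.
      apply: connect_trans (anc_step Hyv) (connect_trans (anc_step Hvu) Hwz).
    exact: connect_trans (anc_step Hyv) Hwz.
  rewrite rot_oth // in Hw; exact: connect_trans (anc_step Hw) Hwz.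
move: y; apply: (anc_ind (P := fun y => anc t2 y z)); first exact: connect0.
move=> y w yz Hw _ Hwz.
case: (eqVneq y v) => [Eyv|yv].
  subst y; rewrite Hvu in Hw; case: Hw => ?; subst w.
  case: (anc_inv Hwz) => [Euz|[w' Hw' Hw'z]]; first by rewrite Euz eqxx in zu.
  rewrite rot_u in Hw'; case: Hw' => ?; subst w'; exact: Hw'z.
case: (eqVneq y u) => [Eyu|yu].
  subst y; apply: connect_trans (anc_step rot_u) (connect_trans _ Hwz).
  by apply: anc_step; rewrite rot_v.
case: (eqVneq (t y) (Some v)) => Hyv.
  rewrite Hyv in Hw; case: Hw => ?; subst w.
  case: (rot_ch Hyv) => H; last exact: connect_trans (anc_step H) Hwz.
  apply: connect_trans (anc_step H) (connect_trans (anc_step rot_u) Hwz).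
rewrite -(rot_oth yv yu Hyv) in Hw; exact: connect_trans (anc_step Hw) Hwz.
Qed.

Lemma rot_sub_v y : anc t2 y v = anc t y u.
Proof.
apply/idP/idP.
  move: y; apply: (anc_ind (P := fun y => anc t y u)); first exact: anc_step.
  move=> y w yv Hw _ Hwz.
  case: (eqVneq y u) => [->|yu]; first exact: connect0.
  case: (eqVneq (t y) (Some v)) => Hyv.
    exact: connect_trans (anc_step Hyv) (anc_step Hvu).
  rewrite rot_oth // in Hw; exact: connect_trans (anc_step Hw) Hwz.
move: y; apply: (anc_ind (P := fun y => anc t2 y v)); first exact: anc_step rot_u.
move=> y w yu Hw _ Hwz.
case: (eqVneq y v) => [->|yv]; first exact: connect0.
case: (eqVneq (t y) (Some v)) => Hyv.
  case: (rot_ch Hyv) => H; last exact: anc_step H.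
  exact: connect_trans (anc_step H) (anc_step rot_u).
rewrite -(rot_oth yv yu Hyv) in Hw; exact: connect_trans (anc_step Hw) Hwz.
Qed.

End Rot.

Lemma good_rot_hyps par u v : good e par -> par v = Some u -> u != v /\ par u != Some v.
Proof.
case=> r [Hr Hreach _ _] Hvu; split.
  apply/eqP => Euv; subst u; by have := par_irr Hr Hreach v; rewrite Hvu eqxx.
apply/eqP => Huv; have := par_neq Hr Hreach Hvu; by rewrite (anc_step Huv).
Qed.

End Gen3.

Section GK1.
Variable T : finType.
Variable e : rel T.
Variable K : {set T}.
Hypothesis esym : symmetric e.
Hypothesis eirr : irreflexive e.
Hypothesis Kuniv : forall k, k \in K -> forall y, y != k -> e k y.
Notation eK := (addv e K).
Notation anc par := (connect (parrel par)).
Notation tT := (ptree T).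
Notation tX := (ptree (option T)).

Lemma eK_sym : symmetric eK.
Proof. by case=> [a|] [b|] //=; exact: esym. Qed.

Lemma eKE a b : eK (Some a) (Some b) = e a b. Proof. by []. Qed.
Lemma eKxl b : eK None (Some b) = (b \in K). Proof. by []. Qed.
Lemma eKxr a : eK (Some a) None = (a \in K). Proof. by []. Qed.
Lemma eKxx : eK None None = false. Proof. by []. Qed.

Lemma Kuniv' k y : k \in K -> y != k -> e y k.
Proof. by move=> Hk Hy; rewrite esym; exact: Kuniv. Qed.

Definition Emb (t : tT) : tX := [ffun z => if z is Some z' then Some (t z') else None].
Definition proj (tx : tX) (o : option (option T)) : option T :=
  match o with
  | Some (Some w) => Some w
  | Some None => if tx None is Some (Some w) then Some w else None
  | None => None
  end.
Definition Del (tx : tX) : tT := [ffun z => proj tx (tx (Some z))].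

Lemma EmbE t z : Emb t z = if z is Some z' then Some (t z') else None.
Proof. by rewrite ffunE. Qed.
Lemma DelE tx z : Del tx z = proj tx (tx (Some z)).
Proof. by rewrite ffunE. Qed.

Lemma x_stuck (tx : tX) : (forall w, tx None != Some (Some w)) -> forall y, anc tx None y -> y = None.
Proof.
move=> H y /ancP [n]; elim: n y => [|n IH] y /=; first by move=> <-.
have Hf : fp tx None = None.
  rewrite /fp; move: (H); case: (tx None) => [[w|]|] //= /(_ w); by rewrite eqxx.
by move=> <-; rewrite (IH _ erefl) Hf.
Qed.

Lemma Del_step tx a w : Del tx a = Some w -> anc tx (Some a) (Some w).
Proof.
rewrite DelE; case E: (tx (Some a)) => [[w'|]|] //=.
  by case=> <-; apply: anc_step.
case E2: (tx None) => [[w'|]|] // [<-].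
exact: connect_trans (anc_step E) (anc_step E2).
Qed.

Lemma Del_anc tx a b : anc (Del tx) a b = anc tx (Some a) (Some b).
Proof.
apply/idP/idP.
  move: a; apply: (anc_ind (P := fun a => anc tx (Some a) (Some b))); first exact: connect0.
  move=> y w _ Hw _ Hwb; exact: connect_trans (Del_step Hw) Hwb.
move=> H.
pose P (y : option T) : Prop := if y is Some a then is_true (anc (Del tx) a b)
  else forall w, tx None = Some (Some w) -> anc (Del tx) w b.
suff : P (Some a) by [].
move: H; apply: (anc_ind (P := P)); first exact: connect0.
move=> [y|] w' yb Hw' Hw'b Pw'; rewrite /P.
  case: w' Hw' Hw'b Pw' => [c|] Hw' Hw'b Pw'.
    apply: connect_trans Pw'; apply: anc_step; by rewrite DelE Hw'.
  case E: (tx None) => [[w|]|].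
  - apply: connect_trans (Pw' _ E); apply: anc_step; by rewrite DelE Hw' /proj E.
  - have Hs : forall w, tx None != Some (Some w) by move=> w0; rewrite E.
    by have := x_stuck Hs Hw'b.
  - have Hs : forall w, tx None != Some (Some w) by move=> w0; rewrite E.
    by have := x_stuck Hs Hw'b.
move=> w Hw; rewrite Hw' in Hw; case: Hw => ?; subst w'; exact: Pw'.
Qed.

Lemma DelEmb t : Del (Emb t) = t.
Proof.
apply/ffunP => z; rewrite DelE !EmbE; case: (t z) => [w|] //=.
by rewrite EmbE.
Qed.

Lemma Emb_anc t a b : anc (Emb t) (Some a) (Some b) = anc t a b.
Proof. by rewrite -Del_anc DelEmb. Qed.

Lemma Emb_ancx t y : anc (Emb t) None y -> y = None.
Proof. apply: x_stuck => w; by rewrite EmbE. Qed.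

Lemma Emb_inj : injective Emb.
Proof. by move=> t t' H; rewrite -(DelEmb t) H DelEmb. Qed.

Lemma Emb_rot t u v : Emb (rotate e t u v) = rotate eK (Emb t) (Some u) (Some v).
Proof.
apply/ffunP => [[y|]]; rewrite rotE !EmbE //.
rewrite rotE !inj_eq //=; try exact: Some_inj.
case: (y == v) => //; case: (y == u) => //.
case: (t y == Some v) => //.
have -> : [exists y0 in subtree (Emb t) (Some y), eK (Some u) y0] =
          [exists y0 in subtree t y, e u y0].
  apply/existsP/existsP => [[[y0|]]|[y0]]; rewrite !inE.
  - by rewrite Emb_anc => /andP [H1 H2]; exists y0; rewrite inE H1.
  - by case/andP => /Emb_ancx.
  - by case/andP => H1 H2; exists (Some y0); rewrite inE Emb_anc H1.
by case: ifP.
Qed.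

Hypothesis econn : forall u v : T, connect e u v.
Hypothesis Kn0 : K != set0.

Lemma lift_conn (S : {set T}) (S' : {set option T}) a b :
  (forall z, (Some z \in S') = (z \in S)) ->
  connect (restr e S) a b -> connect (restr eK S') (Some a) (Some b).
Proof.
move=> HS; apply: connect_map => p q; by rewrite !restrE eKE !HS.
Qed.

Lemma Emb_good t : good e t -> good eK (Emb t).
Proof.
case=> r [Hr Hreach Hedge Hconn].
have Hreach' : forall z, anc (Emb t) z None.
  case=> [z|]; last exact: connect0.
  apply: connect_trans (_ : anc (Emb t) (Some r) None).
    by rewrite Emb_anc.
  by apply: anc_step; rewrite EmbE Hr.
exists None; split => //.
- by rewrite EmbE.
- case=> [a|] [b|] //=.
  + by move/Hedge; rewrite !Emb_anc.
  + by move=> _; left.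
  + by move=> _; right.
- case=> [w|].
  + move=> [a|] [b|]; rewrite !inE; last by [].
    * move=> Ha Hb; apply: (@lift_conn (subtree t w)).
        by move=> z; rewrite !inE Emb_anc.
      by apply: Hconn; rewrite inE -Emb_anc.
    * by move=> _ /Emb_ancx.
    * by move=> /Emb_ancx.
  + have [k Hk] := set0Pn _ Kn0.
    have Hall : forall z, connect (restr eK (subtree (Emb t) None)) z (Some k).
      case=> [z|].
        apply: (@lift_conn setT) => [z'|]; first by rewrite !inE Hreach'.
        rewrite (eq_connect (_ : restr e setT =2 e)) //.
        by move=> a b; rewrite restrE !inE.
      by apply: connect1; rewrite restrE !inE !Hreach'.
    move=> a b _ _; apply: connect_trans (Hall a) _.
    rewrite (sym_connect_sym (restr_sym eK_sym _)); exact: Hall.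
Qed.

Lemma partA k : rcolorable eK k -> rcolorable e k.
Proof.
have G : forall t, is_search_tree e t -> is_search_tree eK (Emb t).
  move=> t /(goodE esym) Ht; apply/(goodE eK_sym); exact: Emb_good.
case=> f [Hlt Hpr]; exists (fun t => f (Emb t)); split.
  by move=> t /G; apply: Hlt.
move=> t t' [Ht Ht' Htt' Hrot]; apply: Hpr; split.
- exact: G.
- exact: G.
- by apply/negP => /eqP /Emb_inj /eqP; apply/negP.
- case: Hrot => [[u [v [Hv ->]]]|[u [v [Hv ->]]]]; [left|right];
  exists (Some u), (Some v); by rewrite Emb_rot EmbE Hv.
Qed.

End GK1.

Section GK2.
Variable T : finType.
Variable e : rel T.
Variable K : {set T}.
Hypothesis esym : symmetric e.
Hypothesis eirr : irreflexive e.
Hypothesis Kuniv : forall k, k \in K -> forall y, y != k -> e k y.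
Notation eK := (addv e K).
Notation anc par := (connect (parrel par)).
Notation tT := (ptree T).
Notation tX := (ptree (option T)).
Notation Del := (@Del T).
Notation proj := (@proj T).

Lemma drop_x (S : {set T}) (S' : {set option T}) a b :
  (forall z, (Some z \in S') = (z \in S)) ->
  connect (restr eK S') (Some a) (Some b) -> connect (restr e S) a b.
Proof.
move=> HS H.
pose P (y : option T) : Prop := if y is Some y' then is_true (connect (restr e S) a y')
  else exists2 k, k \in K & (Some k \in S') && connect (restr e S) a k.
suff : P (Some b) by [].
apply: (connect_fwdP (P := P) H); first exact: connect0.
move=> [p|] [q|] //=; rewrite restrE.
- move=> Hp /and3P [pS qS epq]; apply: connect_trans Hp (connect1 _).
  by rewrite restrE -!HS pS qS.
- move=> Hp /and3P [pS _ pK]; exists p => //; by rewrite pS.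
- move=> [k kK /andP [kS Hk]] /and3P [_ qS qK].
  case: (eqVneq q k) => [->|qk] //.
  apply: connect_trans Hk (connect1 _); rewrite restrE -!HS kS qS /=.
  exact: Kuniv.
Qed.

Lemma ex_sub_eq (tx : tX) y u : y != u ->
  [exists y0 in subtree tx (Some y), eK (Some u) y0] = [exists y0 in subtree (Del tx) y, e u y0].
Proof.
move=> yu; apply/existsP/existsP => [[[y0|]]|[y0]]; rewrite !inE.
- by rewrite -Del_anc => /andP [H1 H2]; exists y0; rewrite inE H1.
- case/andP => _ uK; exists y; rewrite inE connect0 /=; apply: Kuniv => //.
- by case/andP => H1 H2; exists (Some y0); rewrite inE -Del_anc H1.
Qed.

Lemma proj_indep (tx tx' : tX) o : o != Some None -> proj tx o = proj tx' o.
Proof. by case: o => [[w|]|]. Qed.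

Lemma proj_eqx (tx tx' : tX) o : tx None = tx' None -> proj tx o = proj tx' o.
Proof. by move=> H; case: o => [[w|]|] //=; rewrite H. Qed.

Section OneTree.
Variable tx : tX.
Variable rx : option T.
Hypothesis Hr : tx rx = None.
Hypothesis Hreach : forall z, anc tx z rx.
Hypothesis Hedge : forall a b, eK a b -> anc tx a b \/ anc tx b a.
Hypothesis Hconn : forall w, connected_in eK (subtree tx w).

Lemma antis a b : anc tx a b -> anc tx b a -> a = b.
Proof. move=> H1 H2; exact: (anc_antisym Hr Hreach H1 H2). Qed.

Lemma K_comp k y : k \in K -> y != k -> anc tx (Some y) (Some k) \/ anc tx (Some k) (Some y).
Proof. move=> kK yk; apply: Hedge; rewrite eKE esym; exact: Kuniv. Qed.

Lemma x_nonleaf_K y : y != None -> anc tx y None -> exists2 k, k \in K & anc tx (Some k) None.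
Proof.
move=> yx Hy.
have := Hconn (w := None) (a := y) (b := None); rewrite !inE connect0 => /(_ Hy isT) H.
have [p Hp] := connect_last H yx; rewrite restrE !inE => /and3P [Hpx _].
case: p Hp Hpx => [k|] // _ Hk kK; by exists k.
Qed.

Lemma x_child_uniq c1 c2 : tx c1 = Some None -> tx c2 = Some None -> c1 = c2.
Proof.
move=> H1 H2; case: (eqVneq c1 c2) => // c12; exfalso.
have c1x : c1 != None by apply/eqP => E; subst c1; have := par_irr Hr Hreach None; rewrite H1 eqxx.
have [k kK Hk] := x_nonleaf_K c1x (anc_step H1).
have [c Hc Hkc] := anc_child Hk isT.
have Hcl : forall ci, tx ci = Some None -> ci != c -> False.
  move=> ci Hci cic.
  have cix : ci != None by apply/eqP => E; subst ci; have := par_irr Hr Hreach None; rewrite Hci eqxx.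
  case: ci Hci cic cix => [ci|] // Hci cic _.
  case: (eqVneq ci k) => [Eck|cik].
    subst ci; by rewrite (sib_eq Hr Hreach Hci Hc Hkc) eqxx in cic.
  case: (K_comp kK cik) => H.
    by rewrite (sib_eq Hr Hreach Hci Hc (connect_trans H Hkc)) eqxx in cic.
  case/orP: (anc_chain H Hkc) => H'.
    by rewrite (sib_eq Hr Hreach Hci Hc H') eqxx in cic.
  by rewrite (sib_eq Hr Hreach Hc Hci H') eqxx in cic.
case: (eqVneq c1 c) => [Ec1|c1c]; last exact: Hcl c1 H1 c1c.
subst c1; apply: (Hcl c2 H2); by rewrite eq_sym.
Qed.

Lemma x_irr : tx None != Some None.
Proof. exact: par_irr Hr Hreach None. Qed.

Lemma x_sub c : tx c = Some None -> forall y, anc tx y None -> y = None \/ anc tx y c.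
Proof.
move=> Hc y Hy; case: (eqVneq y None) => [->|yx]; first by left.
right; have [c' Hc' Hyc'] := anc_child Hy yx.
by rewrite (x_child_uniq Hc' Hc) in Hyc'.
Qed.

Lemma x_Lx p : tx None = Some p -> forall y, y != None -> anc tx y None ->
  forall z, anc tx z p -> z = p \/ anc tx z None.
Proof.
move=> Hp y yx Hy z Hz.
case: (eqVneq z p) => [->|zp]; first by left.
case Hzx: (anc tx z None); first by right.
exfalso; have [k kK Hk] := x_nonleaf_K yx Hy.
case: z Hz zp Hzx => [z|] Hz zp Hzx; last by rewrite connect0 in Hzx.
case: (eqVneq z k) => [Ezk|zk]; first by subst z; rewrite Hk in Hzx.
case: (K_comp kK zk) => H; first by rewrite (connect_trans H Hk) in Hzx.
case/orP: (anc_chain H Hk) => H'; first by rewrite H' in Hzx.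
case: (anc_inv H') => [//|[w Hw Hwz]].
rewrite Hp in Hw; case: Hw => ?; subst w.
by rewrite (antis Hz Hwz) eqxx in zp.
Qed.

Lemma x_adj u c : tx None = Some (Some u) -> tx c = Some None ->
  [exists y0 in subtree tx c, eK (Some u) y0].
Proof.
move=> Hu Hc; case: (boolP [exists y0 in subtree tx c, eK (Some u) y0]) => // /existsPn Hn; exfalso.
have Hcyc : c != Some u.
  apply/eqP => E; subst c.
  have := antis (anc_step Hu) (anc_step Hc) => //.
have Hn' : forall y0, anc tx y0 c -> ~~ eK (Some u) y0.
  move=> y0 H; have := Hn y0; by rewrite inE H.
have cS : c \in subtree tx (Some u) by rewrite inE (connect_trans (anc_step Hc) (anc_step Hu)).
have uS : Some u \in subtree tx (Some u) by rewrite inE connect0.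
have Hcu := Hconn cS uS.
have : anc tx (Some u) c.
  apply: (connect_fwd (P := fun y => anc tx y c) Hcu (connect0 _ _)).
  move=> p q Hpc; rewrite restrE inE => /and3P [_ Hq epq].
  case: (Hedge epq) => H; last exact: connect_trans H Hpc.
  case/orP: (anc_chain H Hpc) => // Hcq.
  case: (anc_inv Hcq) => [->|[w Hw Hwq]]; first exact: connect0.
  rewrite Hc in Hw; case: Hw => ?; subst w.
  case: (anc_inv Hwq) => [Eq|[w' Hw' Hw'q]].
    subst q; case: p Hpc epq H => [p|] // Hpc pK _.
    case: (eqVneq p u) => [Epu|pu].
      subst p; have E := antis Hpc (connect_trans (anc_step Hc) (anc_step Hu)).
      by rewrite E eqxx in Hcyc.
    have Hup : e u p by rewrite esym; apply: Kuniv => //; rewrite eq_sym.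
    by have := Hn' _ Hpc; rewrite eKE Hup.
  rewrite Hu in Hw'; case: Hw' => ?; subst w'.
  have Hq' : anc tx q (Some u) by rewrite inE in Hq.
  have Equ := antis Hq' Hw'q; subst q.
  by have := Hn' _ Hpc; rewrite (eK_sym K esym) epq.
move=> H; have E := antis H (connect_trans (anc_step Hc) (anc_step Hu)).
by rewrite E eqxx in Hcyc.
Qed.

End OneTree.

Section Good.
Variable tx : tX.
Hypothesis Hg : good eK tx.

Lemma g_antis a b : anc tx a b -> anc tx b a -> a = b.
Proof. case: Hg => rx [Hr Hreach Hedge Hconn]; exact: (antis Hr Hreach). Qed.
Lemma g_irr a : tx a != Some a.
Proof. case: Hg => rx [Hr Hreach Hedge Hconn]; exact: (par_irr Hr Hreach). Qed.
Lemma g_neq a b : tx a = Some b -> ~~ anc tx b a.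
Proof. case: Hg => rx [Hr Hreach Hedge Hconn]; exact: (par_neq Hr Hreach). Qed.
Lemma g_child_uniq c1 c2 : tx c1 = Some None -> tx c2 = Some None -> c1 = c2.
Proof. case: Hg => rx [Hr Hreach Hedge Hconn]; exact: (x_child_uniq Hr Hreach Hedge Hconn). Qed.
Lemma g_sub c : tx c = Some None -> forall y, anc tx y None -> y = None \/ anc tx y c.
Proof. case: Hg => rx [Hr Hreach Hedge Hconn]; exact: (x_sub Hr Hreach Hedge Hconn). Qed.
Lemma g_Lx p : tx None = Some p -> forall y, y != None -> anc tx y None ->
  forall z, anc tx z p -> z = p \/ anc tx z None.
Proof. case: Hg => rx [Hr Hreach Hedge Hconn]; exact: (x_Lx Hr Hreach Hedge Hconn). Qed.
Lemma g_adj u c : tx None = Some (Some u) -> tx c = Some None ->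
  [exists y0 in subtree tx c, eK (Some u) y0].
Proof. case: Hg => rx [Hr Hreach Hedge Hconn]; exact: (x_adj Hr Hreach Hedge Hconn). Qed.

Lemma Del_good (z0 : T) : good e (Del tx).
Proof.
case: (Hg) => rx [Hr Hreach Hedge Hconn].
have [r Hr' Hreach'] : exists2 r, Del tx r = None & forall z, anc (Del tx) z r.
  case: rx Hr Hreach => [r|] Hr Hreach.
    exists r; first by rewrite DelE Hr.
    by move=> z; rewrite Del_anc.
  have [c Hc Hzc] := anc_child (Hreach (Some z0)) isT.
  case: c Hc Hzc => [c|] Hc Hzc; last by rewrite Hc in Hr.
  exists c; first by rewrite DelE Hc /= Hr.
  move=> z; rewrite Del_anc.
  have [c' Hc' Hzc'] := anc_child (Hreach (Some z)) isT.
  by rewrite (g_child_uniq Hc' Hc) in Hzc'.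
exists r; split => //.
  by move=> a b eab; rewrite !Del_anc; apply: Hedge.
move=> w a b; rewrite !inE !Del_anc => Ha Hb.
apply: (@drop_x _ (subtree tx (Some w))).
  by move=> z; rewrite !inE Del_anc.
by apply: Hconn; rewrite inE.
Qed.

End Good.

Section TwoTrees.
Variables tx1 tx2 : tX.
Hypothesis G1 : good eK tx1.
Hypothesis G2 : good eK tx2.

Lemma B2 u v : tx1 (Some v) = Some (Some u) -> tx2 = rotate eK tx1 (Some u) (Some v) ->
  Del tx2 = rotate e (Del tx1) u v.
Proof.
move=> Hv E2.
have [Huv Hu] := good_rot_hyps G1 Hv.
have uv : u != v by move: Huv; apply: contra => /eqP ->.
apply/ffunP => y; rewrite DelE E2 [RHS]rotE.
case: (eqVneq y v) => [Eyv|yv].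
  subst y; rewrite rot_v DelE.
  case E: (tx1 (Some u)) => [[w|]|] //=.
  have Hx : tx1 None != Some (Some v).
    apply/eqP => Ex.
    have := g_antis G1 (anc_step Hv) (connect_trans (anc_step E) (anc_step Ex)).
    by move=> Euv; rewrite Euv eqxx in Huv.
  by rewrite (rot_oth eK) //.
case: (eqVneq y u) => [Eyu|yu].
  by subst y; rewrite rot_u.
have ySv : Some y != Some v by apply: contra yv => /eqP [->].
have ySu : Some y != Some u by apply: contra yu => /eqP [->].
rewrite rotE (negbTE ySv) (negbTE ySu) DelE.
case E: (tx1 (Some y)) => [[w|]|] /=.
- case: (eqVneq w v) => [Ewv|wv].
    subst w; rewrite eqxx (ex_sub_eq _ yu) eqxx.
    by case: ifP.
  have -> : (Some (Some w) == Some (Some v)) = false by apply/negbTE; apply: contra wv => /eqP [->].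
  have -> : (Some w == Some v) = false by apply/negbTE; apply: contra wv => /eqP [->].
  by [].
- case: (eqVneq (tx1 None) (Some (Some v))) => Ex.
    rewrite rotE /= Ex eqxx /=.
    have -> : [exists y0 in subtree tx1 None, eK (Some u) y0] =
              [exists y0 in subtree (Del tx1) y, e u y0].
      rewrite -(ex_sub_eq _ yu).
      apply/existsP/existsP => [[y0]|[y0]]; rewrite !inE.
        case/andP => H1 H2; case: (g_sub G1 E H1) => [Ey0|H3].
          subst y0; exists (Some y); rewrite inE connect0 /=.
          by apply: Kuniv.
        by exists y0; rewrite inE H3.
      case/andP => H1 H2; exists y0; rewrite inE H2 andbT.
      exact: connect_trans H1 (anc_step E).
    by rewrite eqxx; case: ifP.
  rewrite (rot_oth eK) //.
  case E3: (tx1 None) Ex => [[w|]|] //= Ex.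
  have -> : (Some w == Some v) = false by apply/negbTE; apply: contra Ex => /eqP [->].
  by [].
- by [].
Qed.

Lemma B3a u : tx1 None = Some (Some u) -> tx2 = rotate eK tx1 (Some u) None -> Del tx2 = Del tx1.
Proof.
move=> Hv E2.
have [Huv Hu] := good_rot_hyps G1 Hv.
apply/ffunP => y; rewrite !DelE E2.
case: (eqVneq y u) => [Eyu|yu].
  subst y; rewrite rot_u //= rot_v.
  by case E: (tx1 (Some u)) Hu => [[w|]|].
have ySu : Some y != Some u by apply: contra yu => /eqP [->].
case: (eqVneq (tx1 (Some y)) (Some None)) => Hy.
  rewrite rotE /= (negbTE ySu) Hy eqxx (g_adj G1 Hv Hy) /=.
  by rewrite Hv.
rewrite (rot_oth eK) //; exact: proj_indep.
Qed.

Lemma B3b v : tx1 (Some v) = Some None -> tx2 = rotate eK tx1 None (Some v) -> Del tx2 = Del tx1.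
Proof.
move=> Hv E2.
have [Huv Hu] := good_rot_hyps G1 Hv.
apply/ffunP => y; rewrite !DelE E2.
case: (eqVneq y v) => [Eyv|yv].
  subst y; rewrite rot_v Hv /=.
  rewrite (proj_indep _ tx1); last exact: g_irr G1 None.
  have Hi := g_irr G1 None.
  case E: (tx1 None) Hi => [[w|]|] Hi; rewrite /proj ?E //.
have ySv : Some y != Some v by apply: contra yv => /eqP [->].
case: (eqVneq (tx1 (Some y)) (Some (Some v))) => Hy.
  case: (rot_ch eK Hv Huv Hu Hy) => ->; last by rewrite Hy.
  by rewrite /= (rot_u eK tx1 Huv) Hy.
rewrite (rot_oth eK) //.
case: (eqVneq (tx1 (Some y)) (Some None)) => Hy2.
  by have := g_child_uniq G1 Hy2 Hv => [[E]]; rewrite E eqxx in yv.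
exact: proj_indep.
Qed.

End TwoTrees.

Definition fS (S : {set option T}) := if S == [set None] then 2 else #|S| %% 2.

Lemma Lsize tx p : good eK tx -> tx None = Some p -> fS (subtree tx None) != fS (subtree tx p).
Proof.
move=> G Hp.
have px : p != None by apply/eqP => E; subst p; have := g_irr G None; rewrite Hp eqxx.
have pS : p \in subtree tx p by rewrite inE connect0.
have HSp : fS (subtree tx p) = #|subtree tx p| %% 2.
  rewrite /fS; case: ifP => // /eqP E; by rewrite E inE (negbTE px) in pS.
rewrite HSp /fS; case: ifP => [_|/eqP Hne].
  by rewrite neq_ltn ltn_mod orbT.
have [y yS yx] : exists2 y, y \in subtree tx None & y != None.
  case: (pickP [pred z | (z \in subtree tx None) && (z != None)]) => [y /andP [H1 H2]|H].
    by exists y.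
  exfalso; apply: Hne; apply/setP => z; rewrite !inE.
  apply/idP/idP => [Hz|/eqP ->]; last exact: connect0.
  have := H z; rewrite /= inE Hz /= => /negbT; by rewrite negbK.
have -> : subtree tx p = p |: subtree tx None.
  apply/setP => z; rewrite !inE; apply/idP/orP => [Hz|[/eqP ->|Hz]].
  - rewrite inE in yS; case: (g_Lx G Hp yx yS Hz) => [->|->]; by [left|right].
  - exact: connect0.
  - exact: connect_trans Hz (anc_step Hp).
rewrite cardsU1 !inE (negbTE (g_neq G Hp)) add1n !modn2 /=.
by case: (odd _).
Qed.

End GK2.

From mathcomp Require Import zify.

Section Pent.
Variable T : finType.
Variable e : rel T.
Variable K : {set T}.
Hypothesis esym : symmetric e.
Hypothesis eirr : irreflexive e.
Hypothesis Kuniv : forall k, k \in K -> forall y, y != k -> e k y.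
Notation anc par := (connect (parrel par)).
Notation tT := (ptree T).

Lemma stree_step (par : tT) (S : {set T}) (r c : T) : r \in S -> connected_in e S -> connected_in e (S :\ r) ->
  c \in S :\ r -> par c = Some r -> is_stree e par (S :\ r) c -> is_stree e par S r.
Proof.
move=> rS Sc Sc' cS Hc Hst; constructor => // C HC.
have EC : C = S :\ r.
  case: (HC) => CS /set0Pn [y yC] _ _.
  apply/eqP; rewrite eqEsubset CS /=.
  exact: comp_sub HC (subxx _) Sc' (subsetP CS y yC) yC.
by exists c; rewrite EC.
Qed.

Lemma stree_leaf (par : tT) (r : T) : is_stree e par [set r] r.
Proof.
constructor; first by rewrite inE.
  by move=> a b; rewrite !inE => /eqP -> /eqP ->; exact: connect0.
move=> C [CS /set0Pn [y yC] _ _].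
by have := subsetP CS y yC; rewrite setDv inE.
Qed.

Lemma conn_k (S : {set T}) (k : T) : k \in K -> k \in S -> connected_in e S.
Proof.
move=> kK kS.
have H : forall y, y \in S -> connect (restr e S) k y.
  move=> y yS; case: (eqVneq y k) => [->|yk]; first exact: connect0.
  by apply: connect1; rewrite restrE kS yS Kuniv.
move=> a b aS bS; apply: connect_trans (H b bS).
rewrite (sym_connect_sym (restr_sym esym S)); exact: H.
Qed.

Lemma conn_pair (x y : T) : e x y -> connected_in e [set x; y].
Proof.
move=> exy a b; rewrite !inE => Ha Hb.
have Hxy : connect (restr e [set x; y]) x y by apply: connect1; rewrite restrE !inE !eqxx orbT exy.
have Hyx : connect (restr e [set x; y]) y x by rewrite (sym_connect_sym (restr_sym esym _)).
case/orP: Ha => /eqP ->; case/orP: Hb => /eqP -> //; exact: connect0.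
Qed.

Variable s : seq T.
Variable B : {set T}.
Hypothesis Us : uniq s.
Hypothesis HsB : forall z, (z \in s) = (z \notin B).
Definition top : option T := if s is x :: s' then Some (last x s') else None.
Definition mk (bot : T -> option T) : tT :=
  [ffun z => if z \in s then (if index z s is i.+1 then Some (nth z s i) else None) else bot z].

Lemma mkE bot z : mk bot z = if z \in s then (if index z s is i.+1 then Some (nth z s i) else None) else bot z.
Proof. by rewrite ffunE. Qed.

Lemma top_B x : x \in B -> top != Some x.
Proof.
move=> xB; rewrite /top; case: s HsB => [|y s'] // H; apply/eqP => [[E]].
by have := mem_last y s'; rewrite E H xB.
Qed.

Lemma prefix_tree bot (b k : T) : b \in B -> k \in K -> k \in B -> bot b = top ->
  is_stree e (mk bot) B b -> is_search_tree e (mk bot).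
Proof.
move=> bB kK kB Hb HstB.
pose S i := [set z | (z \in drop i s) || (z \in B)].
have Hall : forall i, i <= size s -> is_stree e (mk bot) (S i) (nth b s i).
  move=> i; have [n] := ubnP (size s - i); elim: n i => // n IH i Hn Hi.
  case: (ltnP i (size s)) => Hi'; last first.
    have Ei : i = size s by apply/eqP; rewrite eqn_leq Hi Hi'.
    subst i; rewrite nth_default //.
    have -> : S (size s) = B by apply/setP => z; rewrite !inE drop_size.
    exact: HstB.
  have Hd := drop_nth b Hi'.
  have rs : nth b s i \in s by exact: mem_nth.
  have rB : nth b s i \notin B by rewrite -HsB.
  have ES : S i :\ nth b s i = S i.+1.
    apply/setP => z; rewrite !inE Hd inE.
    case: (eqVneq z (nth b s i)) => [->|zr] //=.
    have := drop_uniq i Us; rewrite Hd /= => /andP [/negbTE -> _].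
    by rewrite (negbTE rB).
  apply: (stree_step (c := nth b s i.+1)).
  - by rewrite !inE Hd inE eqxx.
  - apply: (conn_k kK); by rewrite !inE kB orbT.
  - by rewrite ES; apply: (conn_k kK); rewrite !inE kB orbT.
  - rewrite ES !inE; case: (ltnP i.+1 (size s)) => H.
      by rewrite (drop_nth b H) inE eqxx.
    by rewrite nth_default // bB orbT.
  - rewrite mkE; case: (ltnP i.+1 (size s)) => H.
      rewrite mem_nth // index_uniq //; congr Some; exact: set_nth_default.
    have Ei : i.+1 = size s by apply/eqP; rewrite eqn_leq H Hi'.
    rewrite nth_default ?Ei //.
    have bs : (b \in s) = false by rewrite HsB bB.
    rewrite bs Hb /top; move: Ei; case E: s => [|y s'] //= [Ei].
    by rewrite Ei; move: (nth_last b (y :: s')) => /= ->.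
  - rewrite ES; apply: IH => //.
    lia.
exists (nth b s 0); split.
  rewrite mkE; case E: s => [|y s'] /=.
    by move: Hb; rewrite /top E.
  by rewrite inE eqxx.
have -> : [set: T] = S 0.
  by apply/setP => z; rewrite !inE drop0 HsB; case: (z \in B).
exact: Hall.
Qed.

End Pent.

Section Pent2.
Variable T : finType.
Variable e : rel T.
Variable K : {set T}.
Hypothesis esym : symmetric e.
Hypothesis eirr : irreflexive e.
Hypothesis Kuniv : forall k, k \in K -> forall y, y != k -> e k y.
Notation tT := (ptree T).
Variables a c k : T.
Hypothesis ac : a != c.
Hypothesis nac : ~~ e a c.
Hypothesis kK : k \in K.

Lemma ak : a != k.
Proof. apply/eqP => E; subst a; move: nac; by rewrite Kuniv // eq_sym. Qed.
Lemma ck : c != k.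
Proof. apply/eqP => E; subst c; move: nac; by rewrite esym Kuniv. Qed.

Let B := [set a; k; c].
Let s := [seq z <- enum T | z \notin B].
Let Us : uniq s. Proof. by rewrite filter_uniq // enum_uniq. Qed.
Let HsB z : (z \in s) = (z \notin B). Proof. by rewrite mem_filter mem_enum andbT. Qed.
Let kB : k \in B. Proof. by rewrite !inE eqxx orbT. Qed.
Let aB : a \in B. Proof. by rewrite !inE eqxx. Qed.
Let cB : c \in B. Proof. by rewrite !inE eqxx !orbT. Qed.

Definition chainb (x1 x2 x3 : T) (z : T) : option T :=
  if z == x1 then top s else if z == x2 then Some x1 else Some x2.
Definition starb (z : T) : option T := if z == k then top s else Some k.

Lemma mkB bot z : z \in B -> mk s bot z = bot z.
Proof. by move=> zB; rewrite mkE HsB zB. Qed.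

Lemma mk_s bot z : z \in s -> mk s bot z = None \/ exists2 w, w \in s & mk s bot z = Some w.
Proof.
move=> zs; rewrite mkE zs; case E: (index z s) => [|i]; first by left.
right; exists (nth z s i) => //; apply: mem_nth.
by have := index_mem z s; rewrite zs E => /ltnW.
Qed.

Lemma leaf_mk bot x : x \in B -> (forall z, z \in B -> bot z != Some x) ->
  subtree (mk s bot) x = [set x].
Proof.
move=> xB H; apply: leaf_sub => y.
case: (boolP (y \in s)) => ys.
  case: (mk_s bot ys) => [->|[w ws ->]] //.
  by apply/eqP => [[E]]; move: ws; rewrite E HsB xB.
have yB : y \in B by rewrite -[y \in B]negbK -HsB.
by rewrite mkB //; exact: H.
Qed.

Lemma set3D (x1 x2 x3 : T) : uniq [:: x1; x2; x3] -> [set x1; x2; x3] :\ x1 = [set x2; x3].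
Proof.
rewrite /= !inE negb_or => /andP [/andP [n12 n13] /andP [n23 _]].
apply/setP => z; rewrite !inE; case: (eqVneq z x1) => [->|] //=.
by rewrite (negbTE n12) (negbTE n13).
Qed.

Lemma set2D (x2 x3 : T) : x2 != x3 -> [set x2; x3] :\ x2 = [set x3].
Proof.
move=> n23; apply/setP => z; rewrite !inE; case: (eqVneq z x2) => [->|] //=.
by rewrite (negbTE n23).
Qed.

Lemma conn1 (x : T) : connected_in e [set x].
Proof. by move=> p q; rewrite !inE => /eqP -> /eqP ->; exact: connect0. Qed.

Lemma chain_tree x1 x2 x3 : [set x1; x2; x3] = B -> uniq [:: x1; x2; x3] -> e x2 x3 ->
  is_search_tree e (mk s (chainb x1 x2 x3)).
Proof.
move=> EB U e23.
have x1B : x1 \in B by rewrite -EB !inE eqxx.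
have x2B : x2 \in B by rewrite -EB !inE eqxx orbT.
have x3B : x3 \in B by rewrite -EB !inE eqxx !orbT.
move: (U); rewrite /= !inE negb_or => /andP [/andP [n12 n13] /andP [n23 _]].
apply: (prefix_tree esym Kuniv Us HsB x1B kK kB); first by rewrite /chainb eqxx.
rewrite -EB; apply: (stree_step (c := x2)).
- by rewrite !inE eqxx.
- apply: (conn_k esym Kuniv kK); by rewrite EB.
- by rewrite set3D //; exact: conn_pair.
- by rewrite set3D // !inE eqxx.
- by rewrite mkB // /chainb eq_sym (negbTE n12) eqxx.
rewrite set3D //; apply: (stree_step (c := x3)).
- by rewrite !inE eqxx.
- exact: conn_pair.
- rewrite set2D //; exact: conn1.
- by rewrite set2D // !inE eqxx.
- by rewrite mkB // /chainb eq_sym (negbTE n13) eq_sym (negbTE n23).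
rewrite set2D //; exact: stree_leaf.
Qed.

Lemma star_tree : is_search_tree e (mk s starb).
Proof.
apply: (prefix_tree esym Kuniv Us HsB kB kK kB); first by rewrite /starb eqxx.
constructor => //; first exact: (conn_k esym Kuniv kK).
move=> C [CS /set0Pn [y yC] Cc _].
have Hb : forall z, z \in B :\ k -> (z == a) || (z == c).
  move=> z; rewrite !inE => /andP [zk]; by rewrite (negbTE zk) orbF.
have ne : forall p q, p \in B :\ k -> q \in B :\ k -> ~~ e p q.
  move=> p q /Hb /orP [] /eqP -> /Hb /orP [] /eqP ->; by rewrite ?eirr ?nac // esym.
have yB : y \in B :\ k := subsetP CS y yC.
have EC : C = [set y].
  apply/setP => z; rewrite inE; apply/idP/idP => [zC|/eqP -> //].
  apply: (connect_fwd (P := fun p => p == y) (Cc y z yC zC)); first exact: eqxx.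
  move=> p q _; rewrite restrE => /and3P [pC qC epq].
  by rewrite (negbTE (ne p q (subsetP CS p pC) (subsetP CS q qC))) in epq.
exists y => //; split.
  move: yB; rewrite !inE => /andP [yk yB]; by rewrite mkB ?inE // /starb (negbTE yk).
rewrite EC; exact: stree_leaf.
Qed.


Lemma ex_set1 (x : T) (P : pred T) : [exists y in [set x], P y] = P x.
Proof.
apply/existsP/idP => [[y /andP [/set1P -> //]]|H]; exists x; by rewrite inE eqxx.
Qed.

Lemma rot_mk b1 b2 u v : u \in B -> v \in B ->
  (forall z, z \in B -> rotate e (mk s b1) u v z = b2 z) -> rotate e (mk s b1) u v = mk s b2.
Proof.
move=> uB vB H; apply/ffunP => z.
case: (boolP (z \in s)) => zs.
  have zB : z \notin B by rewrite -HsB.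
  have zu : z != u by apply: contraNneq zB => ->.
  have zv : z != v by apply: contraNneq zB => ->.
  have Hz : mk s b1 z != Some v.
    case: (mk_s b1 zs) => [->|[w ws ->]] //.
    by apply/eqP => [[E]]; move: ws; rewrite E HsB vB.
  by rewrite (rot_oth e zv zu Hz) !mkE zs.
have zB : z \in B by rewrite -[z \in B]negbK -HsB.
by rewrite H // mkB.
Qed.

Lemma mka bot : mk s bot a = bot a. Proof. exact: mkB. Qed.
Lemma mkk bot : mk s bot k = bot k. Proof. exact: mkB. Qed.
Lemma mkc bot : mk s bot c = bot c. Proof. exact: mkB. Qed.
Lemma ak' : (a == k) = false. Proof. exact: negbTE ak. Qed.
Lemma ka' : (k == a) = false. Proof. by rewrite eq_sym ak'. Qed.
Lemma ck' : (c == k) = false. Proof. exact: negbTE ck. Qed.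
Lemma kc' : (k == c) = false. Proof. by rewrite eq_sym ck'. Qed.
Lemma ac' : (a == c) = false. Proof. exact: negbTE ac. Qed.
Lemma ca' : (c == a) = false. Proof. by rewrite eq_sym ac'. Qed.
Lemma topa : (top s == Some a) = false. Proof. exact: negbTE (top_B HsB aB). Qed.
Lemma topk : (top s == Some k) = false. Proof. exact: negbTE (top_B HsB kB). Qed.
Lemma topc : (top s == Some c) = false. Proof. exact: negbTE (top_B HsB cB). Qed.

Lemma eqS (x y : T) : (Some x == Some y) = (x == y). Proof. by []. Qed.

Ltac simp := rewrite /chainb /starb ?eqS ?eqxx ?ak' ?ka' ?ac' ?ca' ?ck' ?kc' ?topa ?topk ?topc /=.

Let T1 := mk s (chainb a k c).
Let T2 := mk s starb.
Let T3 := mk s (chainb c k a).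
Let T4 := mk s (chainb c a k).
Let T5 := mk s (chainb a c k).

Lemma R1 : rotate e T1 a k = T2.
Proof.
rewrite /T1 /T2; apply: (@rot_mk (chainb a k c) starb a k aB kB) => z; rewrite /B !inE => /orP [/orP [] /eqP -> | /eqP ->]; rewrite rotE ?mka ?mkk ?mkc; do 2 simp => //.
rewrite (@leaf_mk (chainb a k c) c cB); last first.
  move=> z0; rewrite /B !inE => /orP [/orP [] /eqP -> | /eqP ->]; do 2 simp => //.
by rewrite (ex_set1 c (e a)) (negbTE nac).
Qed.

Lemma R2 : rotate e T2 k c = T3.
Proof.
rewrite /T2 /T3; by apply: (@rot_mk starb (chainb c k a) k c kB cB) => z; rewrite /B !inE => /orP [/orP [] /eqP -> | /eqP ->]; rewrite rotE ?mka ?mkk ?mkc; do 2 simp.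
Qed.

Lemma R3 : rotate e T3 k a = T4.
Proof.
rewrite /T3 /T4; by apply: (@rot_mk (chainb c k a) (chainb c a k) k a kB aB) => z; rewrite /B !inE => /orP [/orP [] /eqP -> | /eqP ->]; rewrite rotE ?mka ?mkk ?mkc; do 2 simp.
Qed.

Lemma R4 : rotate e T4 c a = T5.
Proof.
rewrite /T4 /T5; apply: (@rot_mk (chainb c a k) (chainb a c k) c a cB aB) => z; rewrite /B !inE => /orP [/orP [] /eqP -> | /eqP ->]; rewrite rotE ?mka ?mkk ?mkc; do 2 simp => //.
rewrite (@leaf_mk (chainb c a k) k kB); last first.
  move=> z0; rewrite /B !inE => /orP [/orP [] /eqP -> | /eqP ->]; do 2 simp => //.
by rewrite (ex_set1 k (e c)) esym (Kuniv kK ck).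
Qed.

Lemma R5 : rotate e T5 c k = T1.
Proof.
rewrite /T5 /T1; by apply: (@rot_mk (chainb a c k) (chainb a k c) c k cB kB) => z; rewrite /B !inE => /orP [/orP [] /eqP -> | /eqP ->]; rewrite rotE ?mka ?mkk ?mkc; do 2 simp.
Qed.


Lemma T1t : is_search_tree e T1.
Proof. apply: chain_tree => //; [by rewrite /= !inE ak' ac' kc' | exact: Kuniv kK _ ck]. Qed.
Lemma T2t : is_search_tree e T2.
Proof. exact: star_tree. Qed.
Lemma T3t : is_search_tree e T3.
Proof.
apply: chain_tree; [|by rewrite /= !inE ck' ca' ka' | exact: Kuniv kK _ ak].
by apply/setP => z; rewrite /B !inE; case: (z == a); case: (z == k); case: (z == c).
Qed.
Lemma T4t : is_search_tree e T4.
Proof.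
apply: chain_tree; [|by rewrite /= !inE ca' ck' ak' | by rewrite esym; exact: Kuniv kK _ ak].
by apply/setP => z; rewrite /B !inE; case: (z == a); case: (z == k); case: (z == c).
Qed.
Lemma T5t : is_search_tree e T5.
Proof.
apply: chain_tree; [|by rewrite /= !inE ac' ak' ck' | by rewrite esym; exact: Kuniv kK _ ck].
by apply/setP => z; rewrite /B !inE; case: (z == a); case: (z == k); case: (z == c).
Qed.

Lemma neq_at (t1 t2 : tT) x : t1 x != t2 x -> t1 != t2.
Proof. by apply: contra => /eqP ->. Qed.

Lemma no2 : ~ rcolorable e 2.
Proof.
case=> f [Hlt Hp].
have H12 : f T1 != f T2.
  apply: Hp; split; [exact: T1t | exact: T2t | | left; exists a, k; split; [|by rewrite R1]].
    apply: (@neq_at _ _ k); rewrite /T1 /T2 !mkk; do 2 simp; by rewrite eq_sym topa.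
  by rewrite /T1 mkk; do 2 simp.
have H23 : f T2 != f T3.
  apply: Hp; split; [exact: T2t | exact: T3t | | left; exists k, c; split; [|by rewrite R2]].
    apply: (@neq_at _ _ c); rewrite /T2 /T3 !mkc; do 2 simp; by rewrite eq_sym topk.
  by rewrite /T2 mkc; do 2 simp.
have H34 : f T3 != f T4.
  apply: Hp; split; [exact: T3t | exact: T4t | | left; exists k, a; split; [|by rewrite R3]].
    apply: (@neq_at _ _ a); rewrite /T3 /T4 !mka; by do 2 simp.
  by rewrite /T3 mka; do 2 simp.
have H45 : f T4 != f T5.
  apply: Hp; split; [exact: T4t | exact: T5t | | left; exists c, a; split; [|by rewrite R4]].
    apply: (@neq_at _ _ a); rewrite /T4 /T5 !mka; do 2 simp; by rewrite eq_sym topc.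
  by rewrite /T4 mka; do 2 simp.
have H51 : f T5 != f T1.
  apply: Hp; split; [exact: T5t | exact: T1t | | left; exists c, k; split; [|by rewrite R5]].
    apply: (@neq_at _ _ k); rewrite /T5 /T1 !mkk; by do 2 simp.
  by rewrite /T5 mkk; do 2 simp.
have := Hlt _ T1t; have := Hlt _ T2t; have := Hlt _ T3t; have := Hlt _ T4t; have := Hlt _ T5t.
move: H12 H23 H34 H45 H51.
case: (f T1) => [|[|?]]; case: (f T2) => [|[|?]]; case: (f T3) => [|[|?]];
  case: (f T4) => [|[|?]]; case: (f T5) => [|[|?]] //.
Qed.

End Pent2.

From mathcomp Require Import boolp.

Section GK3.
Variable T : finType.
Variable e : rel T.
Variable K : {set T}.
Hypothesis esym : symmetric e.
Hypothesis eirr : irreflexive e.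
Hypothesis Kuniv : forall k, k \in K -> forall y, y != k -> e k y.
Notation eK := (addv e K).
Notation anc par := (connect (parrel par)).
Notation tX := (ptree (option T)).
Variable z0 : T.

Lemma fS_le (S : {set option T}) : fS S <= 2.
Proof. rewrite /fS; case: ifP => // _; apply: ltnW; exact: ltn_pmod. Qed.

Variable c : nat.
Hypothesis c3 : 2 < c.
Variable g : ptree T -> nat.
Hypothesis Hglt : forall t, is_search_tree e t -> g t < c.
Hypothesis Hgp : forall t t', radj e t t' -> g t != g t'.

Definition hcol (tx : tX) := (g (Del tx) + fS (subtree tx None)) %% c.

Lemma Dst tx : good eK tx -> is_search_tree e (Del tx).
Proof. move=> G; apply/(goodE esym). exact: (Del_good esym Kuniv G z0). Qed.

Lemma key tx1 tx2 u v : good eK tx1 -> good eK tx2 -> tx1 v = Some u ->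
  tx2 = rotate eK tx1 u v -> hcol tx1 != hcol tx2.
Proof.
move=> G1 G2 Hv E2.
have [Huv Hu] := good_rot_hyps G1 Hv.
have Lt : forall S, fS S < c := fun S => leq_ltn_trans (fS_le S) c3.
rewrite /hcol.
case: u v Hv E2 Huv Hu => [u|] [v|] Hv E2 Huv Hu.
- have DE := B2 esym Kuniv G1 Hv E2.
  have Hne : Del tx1 != Del tx2.
    apply/eqP => E.
    have : Del tx2 v = Del tx1 u by rewrite DE rot_v.
    rewrite -E DelE Hv /= => H.
    case: (Del_good esym Kuniv G1 z0) => r [Hr Hreach _ _].
    by have := par_irr Hr Hreach u; rewrite -H eqxx.
  have Hr : radj e (Del tx1) (Del tx2).
    split; [exact: Dst | exact: Dst | exact: Hne | left; exists u, v; split => //].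
    by rewrite DelE Hv.
  have Hg := Hgp Hr.
  have -> : subtree tx2 None = subtree tx1 None.
    apply/setP => z; rewrite !inE E2 (rot_anc eK Hv Huv Hu) //.
  rewrite eqn_modDr !modn_small //; exact: Hglt (Dst _).
- have DE := B3a esym Kuniv G1 Hv E2.
  have -> : subtree tx2 None = subtree tx1 (Some u).
    by apply/setP => z; rewrite !inE E2 (rot_sub_v eK Hv Huv Hu).
  rewrite DE eqn_modDl !modn_small ?Lt //. have := Lsize esym Kuniv G1 Hv. done.
- have DE := B3b esym Kuniv G1 Hv E2.
  have H2 : tx2 None = Some (Some v) by rewrite E2 (rot_u eK tx1 Huv).
  have -> : subtree tx1 None = subtree tx2 (Some v).
    by apply/setP => z; rewrite !inE E2 (rot_sub_v eK Hv Huv Hu).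
  rewrite DE eqn_modDl !modn_small ?Lt // eq_sym. have := Lsize esym Kuniv G2 H2. done.
- by have := g_irr G1 None; rewrite Hv eqxx.
Qed.

Lemma partB_col : rcolorable eK c.
Proof.
exists hcol; split.
  move=> t _; apply: ltn_pmod; exact: ltn_trans c3.
move=> t t' [S1 S2 _ [[u [v [Hv E]]]|[u [v [Hv E]]]]].
- apply: key (Hv) E; exact/(goodE (eK_sym K esym)).
- rewrite eq_sym; apply: key (Hv) E; exact/(goodE (eK_sym K esym)).
Qed.

End GK3.


Lemma rcol_mono (T : finType) (e : rel T) m n : m <= n -> rcolorable e m -> rcolorable e n.
Proof. move=> Hmn [f [Hlt Hp]]; exists f; split => // t Ht; exact: leq_trans (Hlt t Ht) Hmn. Qed.

Theorem proposition3p2 (T : finType) (e : rel T) (K : {set T}) :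
  symmetric e -> irreflexive e ->
  (forall u v : T, connect e u v) ->
  (exists u v : T, u != v /\ ~~ e u v) ->
  K != set0 ->
  (forall k, k \in K -> forall y, y != k -> e k y) ->
  chi_R (addv e K) = chi_R e.
Proof.
move=> esym eirr econn [a [c [ac nac]]] Kn0 Kuniv.
have [k kK] := set0Pn _ Kn0.
rewrite /chi_R.
case: ex_minnP => m /asboolP Hm Hmin.
case: ex_minnP => n /asboolP Hn Hminn.
have n3 : 2 < n.
  rewrite ltnNge; apply/negP => Hn2.
  exact: (no2 esym eirr Kuniv ac nac kK) (rcol_mono Hn2 Hn).
have HKn : rcolorable (addv e K) n.
  case: Hn => g [Hglt Hgp]; exact (partB_col esym Kuniv a n3 Hglt Hgp).
have Hme : rcolorable e m := partA esym econn Kn0 Hm.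
apply/eqP; rewrite eqn_leq; apply/andP; split.
  apply: Hmin; exact/asboolP.
apply: Hminn; exact/asboolP.
Qed.
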